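(* Let $G,G'$ be locally compact Hausdorff groupoids with Haar systems $\lambda^{u}_{G}$, $\lambda^{u}_{G'}$ and $2$-cocycles $\sigma,\sigma'$, with $G'$ second countable and $G$ metrizable by a metric $d_{G}$ for which inversion is an isometry and $r,s$ are contractions. Let $\pi:G\to G'$ be continuous, proper, a morphism of groupoids, such that for every $u\in G^{0}$, $\pi|_{G^{u}}:G^{u}\to(G')^{\pi(u)}$ is a homeomorphism with $\lambda^{u}_{G}(E)=\lambda^{\pi(u)}_{G'}(\pi(E))$ for Borel $E\subseteq G^u$, and $\sigma(s,t)=\sigma'(\pi(s),\pi(t))$ for composable $(s,t)$. Assume $\pi$ is regular. Let $H'=\{x'\in G':\#\pi^{-1}\{x'\}>1\}$ and $H=\pi^{-1}(H')$, with metrics $d_{H'}(x',y')=d_{G}(\pi^{-1}\{x'\},\pi^{-1}\{y'\})$ (Hausdorff distance) and $d_{H}(x,y)=d_{G}(x,y)+d_{H'}(\pi(x),\pi(y))$. Then $H'$ and $H$, with these metrics, are locally compact Hausdorff topological groupoids, and $\pi:H\to H'$ is an open, continuous, proper morphism of groupoids.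
   Context: $G^{u}=r^{-1}\{u\}$. For compact $E,F\subseteq G$, $d_G(E,F)=\inf\{\epsilon>0: F\subseteq G(E,\epsilon), E\subseteq G(F,\epsilon)\}$ where $G(A,\epsilon)=\{x:d_G(x,y)<\epsilon\text{ for some }y\in A\}$, and $\mathrm{diam}_G(E)=\sup\{d_G(x,y):x,y\in E\}$. The map $\pi$ is regular if for every $x'\in H'$ and $\epsilon>0$ there is an open set $U'\subseteq G'$ containing $x'$ such that every $y'\in U'$ satisfies $d_{G}(\pi^{-1}\{x'\},\pi^{-1}\{y'\})<\epsilon$ or $\mathrm{diam}_{G}(\pi^{-1}\{y'\})<\epsilon$. *)

(* Defs.v *)
From HB Require Import structures.
From mathcomp Require Import all_boot all_order all_algebra.
From mathcomp Require Import all_classical all_reals all_analysis.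

Set Implicit Arguments.
Unset Strict Implicit.
Unset Printing Implicit Defensive.

Import Order.TTheory GRing.Theory Num.Theory.
Import numFieldNormedType.Exports.
Local Open Scope classical_set_scope.
Local Open Scope ring_scope.

Record groupoid (G : Type) := Groupoid {
  g_unit : set G;
  g_r : G -> G;
  g_s : G -> G;
  g_mul : G -> G -> G;     (* product, meaningful on composable pairs *)
  g_inv : G -> G }.

Definition composable (G : Type) (Γ : groupoid G) (x y : G) : Prop :=
  g_s Γ x = g_r Γ y.

Definition composable_pairs (G : Type) (Γ : groupoid G) : set (G * G) :=
  [set p | composable Γ p.1 p.2].

Definition is_groupoid (G : Type) (Γ : groupoid G) : Prop :=
  let r := g_r Γ in let s := g_s Γ in let m := g_mul Γ in let i := g_inv Γ in
  (forall x, g_unit Γ (r x) /\ g_unit Γ (s x)) /\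
  (forall u, g_unit Γ u -> r u = u /\ s u = u) /\
  (forall x y, composable Γ x y -> r (m x y) = r x /\ s (m x y) = s y) /\
  (forall x y z, composable Γ x y -> composable Γ y z ->
      m (m x y) z = m x (m y z)) /\
  (forall x, m (r x) x = x /\ m x (s x) = x) /\
  (forall x, [/\ r (i x) = s x, s (i x) = r x,
                 m x (i x) = r x & m (i x) x = s x]).

Definition range_fiber (G : Type) (Γ : groupoid G) (u : G) : set G :=
  [set x | g_r Γ x = u].

Definition groupoid_morphism_on (G G' : Type) (Γ : groupoid G)
  (Γ' : groupoid G') (S : set G) (f : G -> G') : Prop :=
  forall x y, S x -> S y -> composable Γ x y ->
    composable Γ' (f x) (f y) /\ f (g_mul Γ x y) = g_mul Γ' (f x) (f y).

Definition subgroupoid (G : Type) (Γ : groupoid G) (S : set G) : Prop :=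
  (forall x, S x -> [/\ S (g_r Γ x), S (g_s Γ x) & S (g_inv Γ x)]) /\
  (forall x y, S x -> S y -> composable Γ x y -> S (g_mul Γ x y)).

Definition lch_topological_groupoid (G : topologicalType) (Γ : groupoid G) :
  Prop :=
  is_groupoid Γ /\ hausdorff_space G /\ locally_compact [set: G] /\
  continuous (g_inv Γ) /\ continuous (g_r Γ) /\ continuous (g_s Γ) /\
  {within composable_pairs Γ, continuous (fun p => g_mul Γ p.1 p.2)}.

Definition proper_map (X Y : topologicalType) (f : X -> Y) : Prop :=
  forall K : set Y, compact K -> compact (f @^-1` K).

(* (the topology on S is the metric topology of d restricted to S).     *)
Section MetricOnSubset.
Variables (R : realType) (X : Type) (S : set X) (d : X -> X -> R).

Definition metric_on : Prop :=
  forall x y z, S x -> S y -> S z ->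
    [/\ d x x = 0, (d x y = 0 -> x = y), d x y = d y x &
        d x z <= d x y + d y z].

Definition mball (x : X) (e : R) : set X := [set y | S y /\ d x y < e].

Definition mopen (U : set X) : Prop :=
  U `<=` S /\ forall x, U x -> exists2 e, 0 < e & mball x e `<=` U.

Definition mcompact (K : set X) : Prop :=
  K `<=` S /\
  forall (I : Type) (F : I -> set X), (forall i, mopen (F i)) ->
    K `<=` \bigcup_i F i ->
    exists2 D : set I, finite_set D & K `<=` \bigcup_(i in D) F i.

Definition mhausdorff : Prop :=
  forall x y, S x -> S y -> x <> y ->
    exists U V, [/\ mopen U, mopen V, U x, V y & U `&` V = set0].

Definition mlocally_compact : Prop :=
  forall x, S x -> exists2 K, mcompact K & exists2 e, 0 < e & mball x e `<=` K.

End MetricOnSubset.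

Section MetricMaps.
Variables (R : realType) (X Y : Type) (S : set X) (d : X -> X -> R)
  (T : set Y) (e : Y -> Y -> R).

Definition mcontinuous (f : X -> Y) : Prop :=
  (forall x, S x -> T (f x)) /\
  forall x, S x -> forall eps, 0 < eps -> exists2 del, 0 < del &
    forall y, S y -> d x y < del -> e (f x) (f y) < eps.

Definition mopen_map (f : X -> Y) : Prop :=
  forall U, mopen S d U -> mopen T e (f @` U).

Definition mproper (f : X -> Y) : Prop :=
  forall K, mcompact T e K -> mcompact S d (S `&` f @^-1` K).

End MetricMaps.

Definition metric_lch_topological_groupoid (R : realType) (X : Type)
  (Γ : groupoid X) (S : set X) (d : X -> X -> R) : Prop :=
  subgroupoid Γ S /\ mhausdorff S d /\ mlocally_compact S d /\
  mcontinuous S d S d (g_r Γ) /\ mcontinuous S d S d (g_s Γ) /\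
  mcontinuous S d S d (g_inv Γ) /\
      (forall x y, S x -> S y -> composable Γ x y ->
        forall eps, 0 < eps -> exists2 del, 0 < del &
          forall x' y', S x' -> S y' -> composable Γ x' y' ->
            d x x' < del -> d y y' < del ->
            d (g_mul Γ x y) (g_mul Γ x' y') < eps).

Section Hausdorff.
Variables (R : realType) (X : Type) (d : X -> X -> R).

Definition enlarge (A : set X) (eps : R) : set X :=
  [set x | exists2 y, A y & d x y < eps].

Definition hdist (E F : set X) : R :=
  inf [set eps | 0 < eps /\ F `<=` enlarge E eps /\ E `<=` enlarge F eps].

Definition diam (E : set X) : R :=
  sup [set d p.1 p.2 | p in E `*` E].

End Hausdorff.

Definition Borel (G : ptopologicalType) := g_sigma_algebraType (@open G).

Definition borel_set (G : ptopologicalType) (E : set G) : Prop :=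
  <<s @open G >> E.

Section Radon.
Variables (R : realType) (G : ptopologicalType).

Definition radon (mu : {measure set (Borel G) -> \bar R}) : Prop :=
  [/\ (forall K : set G, compact K -> (mu K < +oo)%E),
      (forall E : set G, borel_set E ->
         mu E = ereal_inf [set mu U | U in [set U : set G | open U /\ E `<=` U]]) &
      (forall U : set G, open U ->
         mu U = ereal_sup [set mu K | K in [set K : set G | compact K /\ K `<=` U]])].

Definition msupport (mu : {measure set (Borel G) -> \bar R}) : set G :=
  [set x | forall U : set G, open U -> U x -> (0 < mu U)%E].

Definition Cc (f : G -> R) : Prop :=
  continuous f /\ compact (closure [set x | f x != 0]).

Definition haar_system (Γ : groupoid G)
  (lam : G -> {measure set (Borel G) -> \bar R}) : Prop :=
  [/\ (forall u, g_unit Γ u ->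
         radon (lam u) /\ msupport (lam u) = range_fiber Γ u),
      (forall f, Cc f ->
         {within g_unit Γ, continuous (fun u => fine (\int[lam u]_x (f x)%:E))}) &
      (forall f, Cc f -> forall x,
         (\int[lam (g_s Γ x)]_(y in range_fiber Γ (g_s Γ x))
             (f (g_mul Γ x y))%:E =
          \int[lam (g_r Γ x)]_y (f y)%:E)%E)].

End Radon.

(* circle-valued functions: T is represented inside C = R x R *)
Definition cmul (R : realType) (z w : R * R) : R * R :=
  (z.1 * w.1 - z.2 * w.2, z.1 * w.2 + z.2 * w.1).

Definition two_cocycle (R : realType) (G : topologicalType) (Γ : groupoid G)
  (sigma : G -> G -> R * R) : Prop :=
  let m := g_mul Γ in
  [/\ {within composable_pairs Γ, continuous (fun p => sigma p.1 p.2)},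
      (forall x y, composable Γ x y ->
         (sigma x y).1 ^+ 2 + (sigma x y).2 ^+ 2 = 1),
      (forall x y z, composable Γ x y -> composable Γ y z ->
         cmul (sigma x y) (sigma (m x y) z) = cmul (sigma y z) (sigma x (m y z))) &
      (forall x, sigma (g_r Γ x) x = (1, 0) /\ sigma x (g_s Γ x) = (1, 0))].

Definition metrizes (R : realType) (G : topologicalType) (d : G -> G -> R) :
  Prop :=
  metric_on [set: G] d /\
  forall x : G, nbhs x = filter_from [set e : R | 0 < e] (fun e => [set y | d x y < e]).

Definition pfiber (G G' : Type) (pi : G -> G') (x' : G') : set G :=
  pi @^-1` [set x'].

Definition Hprime (G G' : Type) (pi : G -> G') : set G' :=
  [set x' | exists x1 x2, [/\ pi x1 = x', pi x2 = x' & x1 <> x2]].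

Definition dHprime (R : realType) (G G' : Type) (d : G -> G -> R)
  (pi : G -> G') (x' y' : G') : R :=
  hdist d (pfiber pi x') (pfiber pi y').

Definition dH (R : realType) (G G' : Type) (d : G -> G -> R)
  (pi : G -> G') (x y : G) : R :=
  d x y + dHprime d pi (pi x) (pi y).

Definition regular_map (R : realType) (G : Type) (G' : topologicalType)
  (d : G -> G -> R) (pi : G -> G') : Prop :=
  forall x', Hprime pi x' -> forall eps, 0 < eps ->
    exists U' : set G', [/\ open U', U' x' &
      forall y', U' y' ->
        hdist d (pfiber pi x') (pfiber pi y') < eps \/
        diam d (pfiber pi y') < eps].

(* Main.v *)
Require Import Defs.
From HB Require Import structures.
From mathcomp Require Import all_boot all_order all_algebra.
From mathcomp Require Import all_classical all_reals all_analysis.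
From mathcomp Require Import lra.
Import Order.TTheory GRing.Theory Num.Theory.
Import numFieldNormedType.Exports.
Local Open Scope classical_set_scope.
Local Open Scope ring_scope.
Set Implicit Arguments.
Unset Strict Implicit.
Unset Printing Implicit Defensive.
Section MetricGen.
Variables (R : realType) (X : Type) (S : set X) (d : X -> X -> R).
Hypothesis hm : metric_on S d.

Lemma m_00 x : S x -> d x x = 0.
Proof. by move=> Sx; case: (hm Sx Sx Sx). Qed.
Lemma m_sym x y : S x -> S y -> d x y = d y x.
Proof. by move=> Sx Sy; case: (hm Sx Sy Sx). Qed.
Lemma m_tri x y z : S x -> S y -> S z -> d x z <= d x y + d y z.
Proof. by move=> Sx Sy Sz; case: (hm Sx Sy Sz). Qed.
Lemma m_eq x y : S x -> S y -> d x y = 0 -> x = y.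
Proof. by move=> Sx Sy; case: (hm Sx Sy Sx). Qed.
Lemma m_ge0 x y : S x -> S y -> 0 <= d x y.
Proof.
move=> Sx Sy; have := m_tri Sx Sy Sx; rewrite m_00 // (m_sym Sy Sx) => h.
lra.
Qed.

Lemma mopen_mball x e : S x -> mopen S d (mball S d x e).
Proof.
move=> Sx; split; first by move=> y [].
move=> y [Sy dxy]; exists (e - d x y); first lra.
move=> z [Sz dyz]; split => //.
have := m_tri Sx Sy Sz; lra.
Qed.

Lemma mhausdorffP : mhausdorff S d.
Proof.
move=> x y Sx Sy xy.
have hp : 0 < d x y.
  rewrite lt_neqAle m_ge0 // andbT; apply/eqP => h; apply: xy.
  exact: m_eq.
exists (mball S d x (d x y / 2)), (mball S d y (d x y / 2)).
split; [exact: mopen_mball|exact: mopen_mball|split => //; rewrite m_00 //; lra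
  |split => //; rewrite m_00 //; lra|].
apply/seteqP; split => // z [[Sz h1] [_ h2]].
have := m_tri Sx Sz Sy; rewrite (m_sym Sz Sy); lra.
Qed.

Definition mclus (u : nat -> X) (y : X) :=
  forall eta, 0 < eta -> forall N, exists2 n, (N <= n)%N & d y (u n) < eta.

End MetricGen.
Lemma finite_nat_bounded (A : set nat) : finite_set A ->
  exists M, forall n, A n -> (n <= M)%N.
Proof.
move=> /finite_fsetP [Y ->].
exists (\sum_(i <- finmap.enum_fset Y) i)%N => n /= nY.
rewrite (big_rem n nY) /=; exact: leq_addr.
Qed.

Lemma archi1 (R : realType) (e : R) : 0 < e ->
  exists N, forall n, (N <= n)%N -> n.+1%:R^-1 < e.
Proof.
move=> e0; have [N _ HN] := near_infty_natSinv_lt (PosNum e0).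
by exists N => n Nn; apply: HN.
Qed.
Section MetricCompact.
Variables (R : realType) (X : Type) (S : set X) (d : X -> X -> R).
Hypothesis hm : metric_on S d.

Lemma mcompact_clus (K : set X) (u : nat -> X) :
  mcompact S d K -> (forall n, K (u n)) -> exists y, K y /\ mclus d u y.
Proof.
move=> [KS Kc] Ku; apply: contrapT => hno.
have H : forall y, K y -> exists e, exists N, 0 < e /\
    forall n, (N <= n)%N -> ~ d y (u n) < e.
  move=> y Ky; apply: contrapT => h; apply: hno; exists y; split => // eta eta0 N.
  apply: contrapT => h2; apply: h; exists eta, N; split => // n Nn dlt.
  by apply: h2; exists n.
pose I := {p : X * R * nat | K p.1.1 /\ 0 < p.1.2 /\
    forall n, (p.2 <= n)%N -> ~ d p.1.1 (u n) < p.1.2}.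
pose F := fun i : I => mball S d (sval i).1.1 (sval i).1.2.
have Fo : forall i, mopen S d (F i).
  move=> i; exact: mopen_mball (KS _ (proj1 (svalP i))).
have Fc : K `<=` \bigcup_i F i.
  move=> x Kx; have [e [N [e0 hN]]] := H x Kx.
  exists (exist _ (x, e, N) (conj Kx (conj e0 hN))) => //.
  by rewrite /F /=; split; [exact: KS|rewrite (m_00 hm) //; exact: KS].
have [D Dfin KD] := Kc I F Fo Fc.
have [M hM] := finite_nat_bounded (finite_image (fun i : I => (sval i).2) Dfin).
have [i Di [_ hi]] := KD _ (Ku M).
apply: (proj2 (proj2 (svalP i)) M) => //; apply: hM; by exists i.
Qed.

End MetricCompact.
Section MetricCompact2.
Variables (R : realType) (X : Type) (S : set X) (d : X -> X -> R).
Hypothesis hm : metric_on S d.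

Lemma clus_mcompact (K : set X) : K `<=` S ->
  (forall u : nat -> X, (forall n, K (u n)) -> exists y, K y /\ mclus d u y) ->
  mcompact S d K.
Proof.
move=> KS Hc; split => // I F Fo Fc.
case: (pselect (exists x, K x)) => [[x0 Kx0]|K0]; last first.
  exists set0 => // x Kx; exfalso; apply: K0; by exists x.
have [del del0 Hleb] : exists2 del, 0 < del &
    forall x, K x -> exists i, mball S d x del `<=` F i.
  apply: contrapT => hn.
  have H1 : forall n : nat, exists x, K x /\
      forall i, ~ (mball S d x n.+1%:R^-1 `<=` F i).
    move=> n; apply: contrapT => hn2; apply: hn; exists n.+1%:R^-1.
      by rewrite invr_gt0 ltr0Sn.
    move=> x Kx; apply: contrapT => h3; apply: hn2; exists x; split => // i hi.
    by apply: h3; exists i.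
  pose u n := projT1 (cid (H1 n)).
  have Ku n : K (u n) := proj1 (projT2 (cid (H1 n))).
  have [y [Ky cy]] := Hc u Ku.
  have [j _ Fj] := Fc y Ky.
  have [r r0 hr] := (Fo j).2 y Fj.
  have r20 : 0 < r / 2 by lra.
  have [N HN] := archi1 r20.
  have [n Nn dyn] := cy (r/2) r20 N.
  apply: (proj2 (projT2 (cid (H1 n))) j) => z [Sz dz].
  have dz' : d (u n) z < n.+1%:R^-1 := dz.
  apply: hr; split => //.
  have := m_tri hm (KS _ Ky) (KS _ (Ku n)) Sz; have := HN n Nn.
  move=> h1 h2; move: h1 h2 dyn dz'.
  move: (n.+1%:R^-1) (d y z) (d y (u n)) (d (u n) z) => a b c e; lra.
have [n [net [Knet Hnet]]] : exists n (net : nat -> X),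
    (forall k, (k < n)%N -> K (net k)) /\
    forall x, K x -> exists2 k, (k < n)%N & d (net k) x < del.
  apply: contrapT => hn.
  have H2 : forall p : nat * (nat -> X), exists x,
      (forall k, (k < p.1)%N -> K (p.2 k)) ->
      K x /\ forall k, (k < p.1)%N -> ~ d (p.2 k) x < del.
    move=> [m f] /=.
    case: (pselect (forall k, (k < m)%N -> K (f k))) => hf; last by exists x0.
    apply: contrapT => h; apply: hn; exists m, f; split => // x Kx.
    apply: contrapT => h2; apply: h; exists x => _; split => // k km dk.
    by apply: h2; exists k.
  pose nxt p := projT1 (cid (H2 p)).
  pose U := fix U (m : nat) : nat -> X :=
    if m is m'.+1 then (fun k => if k == m' then nxt (m', U m') else U m' k)
    else (fun _ => x0).
  have Ustab : forall m k, (k < m)%N -> U m k = U k.+1 k.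
    elim=> // m IH k; rewrite ltnS leq_eqVlt => /orP [/eqP ->|km] //.
    by rewrite [LHS]/= (ltn_eqF km); exact: IH.
  have UK : forall m k, (k < m)%N -> K (U m k).
    elim=> // m IH k; rewrite ltnS leq_eqVlt => /orP [/eqP ->|km] /=.
      by rewrite eqxx; exact: (proj1 ((projT2 (cid (H2 (m, U m)))) IH)).
    by rewrite (ltn_eqF km); exact: IH.
  pose v k := U k.+1 k.
  have vsep : forall k m, (k < m)%N -> ~ d (v k) (v m) < del.
    move=> k m km.
    have := proj2 (projT2 (cid (H2 (m, U m))) (UK m)) k km.
    have e1 : v k = U m k by rewrite (Ustab m k km).
    have e2 : v m = nxt (m, U m) by rewrite /v /= eqxx.
    by rewrite e1 e2.
  have Kv k : K (v k) := UK k.+1 k (ltnSn k).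
  have [y [Ky cy]] := Hc v Kv.
  have d20 : 0 < del / 2 by lra.
  have [a _ da] := cy (del/2) d20 0%N.
  have [b ab db] := cy (del/2) d20 a.+1.
  apply: (vsep a b ab).
  have := m_tri hm (KS _ (Kv a)) (KS _ Ky) (KS _ (Kv b)).
  rewrite (m_sym hm (KS _ (Kv a)) (KS _ Ky)); lra.
have H3 : forall x, exists i, K x -> mball S d x del `<=` F i.
  move=> x; case: (pselect (K x)) => Kx.
    by have [i hi] := Hleb x Kx; exists i.
  by have [i _] := Hleb x0 Kx0; exists i.
pose idx x := projT1 (cid (H3 x)).
exists ((fun k => idx (net k)) @` `I_n); first exact: finite_image.
move=> x Kx; have [k kn dk] := Hnet x Kx.
exists (idx (net k)); first by exists k.
apply: (projT2 (cid (H3 (net k))) (Knet k kn)); split => //; exact: KS.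
Qed.

End MetricCompact2.
Section Hdist.
Variables (R : realType) (X : Type) (d : X -> X -> R).
Hypothesis hm : metric_on [set: X] d.

Let d00 x : d x x = 0. Proof. exact: (m_00 hm (I : setT x)). Qed.
Let dsym x y : d x y = d y x. Proof. exact: (m_sym hm (I : setT x) (I : setT y)). Qed.
Let dtri x y z : d x z <= d x y + d y z.
Proof. exact: (m_tri hm (I : setT x) (I : setT y) (I : setT z)). Qed.
Let dge0 x y : 0 <= d x y. Proof. exact: (m_ge0 hm (I : setT x) (I : setT y)). Qed.

Definition HS (E F : set X) := [set eps : R | 0 < eps /\
  F `<=` enlarge d E eps /\ E `<=` enlarge d F eps].

Lemma hdistE E F : hdist d E F = inf (HS E F). Proof. by []. Qed.

Lemma HS_lb E F : has_lbound (HS E F).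
Proof. by exists 0 => e [/ltW]. Qed.

Lemma HS_up E F e e' : HS E F e -> e <= e' -> HS E F e'.
Proof.
move=> [e0 [h1 h2]] ee'; split; first exact: lt_le_trans ee'.
split => x /[dup] Ex.
  by move=> /h1 [y Ey dxy]; exists y => //; exact: lt_le_trans ee'.
by move=> /h2 [y Ey dxy]; exists y => //; exact: lt_le_trans ee'.
Qed.

Lemma hdist_ge0 E F : 0 <= hdist d E F.
Proof.
rewrite hdistE; case: (pselect (HS E F !=set0)) => [ne|e].
  by apply: lb_le_inf => // x [/ltW].
have -> : HS E F = set0 by apply/seteqP; split => // x hx; apply: e; exists x.
by rewrite inf0.
Qed.

Lemma hdist_le E F e : HS E F e -> hdist d E F <= e.
Proof. by move=> h; rewrite hdistE; apply: ge_inf => //; exact: HS_lb. Qed.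

Lemma hdist_lt E F e : HS E F !=set0 -> hdist d E F < e ->
  exists2 t, HS E F t & t < e.
Proof. by move=> ne; rewrite hdistE => /(inf_lt ne). Qed.

Lemma hdist_refl E : hdist d E E = 0.
Proof.
apply/le_anti; rewrite hdist_ge0 andbT; apply/ler_addgt0Pr => z z0; rewrite add0r.
apply: hdist_le; split => //; split => x Ex; exists x => //; by rewrite d00.
Qed.

Lemma HS_sym E F : HS E F = HS F E.
Proof. by apply/seteqP; split => e [e0 [h1 h2]]. Qed.

Lemma hdist_sym E F : hdist d E F = hdist d F E.
Proof. by rewrite !hdistE HS_sym. Qed.

Lemma HS_tri E F G a b : HS E F a -> HS F G b -> HS E G (a + b).
Proof.
move=> [a0 [h1 h2]] [b0 [h3 h4]]; split; first exact: addr_gt0.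
split => x.
  move=> /h3 [y Fy dxy]; have [z Ez dyz] := h1 y Fy; exists z => //.
  by apply: (le_lt_trans (dtri x y z)); rewrite addrC; apply: ltrD.
move=> /h2 [y Fy dxy]; have [z Gz dyz] := h4 y Fy; exists z => //.
by apply: (le_lt_trans (dtri x y z)); apply: ltrD.
Qed.

Lemma hdist_tri E F G : HS E F !=set0 -> HS F G !=set0 ->
  hdist d E G <= hdist d E F + hdist d F G.
Proof.
move=> n1 n2; apply/ler_addgt0Pr => e e0.
have e20 : 0 < e / 2 by lra.
have [a Ha ha] := inf_adherent e20 (conj n1 (HS_lb E F)).
have [b Hb hb] := inf_adherent e20 (conj n2 (HS_lb F G)).
have := hdist_le (HS_tri Ha Hb); rewrite !hdistE in ha hb *.
move: ha hb; move: (inf (HS E F)) (inf (HS F G)) (inf (HS E G)) => p q r.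
lra.
Qed.

Lemma HS_bound E F M : E !=set0 -> F !=set0 ->
  (forall x y, (E x \/ F x) -> (E y \/ F y) -> d x y <= M) -> HS E F (M + 1).
Proof.
move=> [x0 Ex0] [y0 Fy0] hM; have M0 : 0 <= M.
  by apply: le_trans (hM x0 x0 (or_introl Ex0) (or_introl Ex0)); rewrite d00.
split; first lra.
split => x hx.
  exists x0 => //; apply: (le_lt_trans (hM x x0 _ _)); [by right|by left|lra].
exists y0 => //; apply: (le_lt_trans (hM x y0 _ _)); [by left|by right|lra].
Qed.

Lemma hdist_img (f : X -> X) E F : (forall a b, d (f a) (f b) <= d a b) ->
  HS E F !=set0 -> hdist d (f @` E) (f @` F) <= hdist d E F.
Proof.
move=> hf ne; rewrite [X in _ <= X]hdistE; apply: lb_le_inf => // e [e0 [h1 h2]].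
apply: hdist_le; split => //; split => _ [x hx <-].
  have [y Ey dxy] := h1 x hx; exists (f y); first by exists y.
  exact: le_lt_trans (hf _ _) dxy.
have [y Ey dxy] := h2 x hx; exists (f y); first by exists y.
exact: le_lt_trans (hf _ _) dxy.
Qed.

Lemma diam_ge E a b : (exists M, forall x y, E x -> E y -> d x y <= M) ->
  E a -> E b -> d a b <= diam d E.
Proof.
move=> [M hM] Ea Eb; apply: ub_le_sup; last by exists (a, b).
by exists M => _ [[x y] [Ex Ey] <-]; apply: hM.
Qed.

End Hdist.
Section Topo.
Variables (R : realType) (G : ptopologicalType) (d : G -> G -> R).
Hypothesis hd : metrizes d.

Let hm : metric_on [set: G] d := proj1 hd.
Let d00 x : d x x = 0. Proof. exact: (m_00 hm (I : setT x)). Qed.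
Let dsym x y : d x y = d y x. Proof. exact: (m_sym hm (I : setT x) (I : setT y)). Qed.
Let dtri x y z : d x z <= d x y + d y z.
Proof. exact: (m_tri hm (I : setT x) (I : setT y) (I : setT z)). Qed.
Let dge0 x y : 0 <= d x y. Proof. exact: (m_ge0 hm (I : setT x) (I : setT y)). Qed.

Lemma nbhsP x A : nbhs x A <-> exists2 e, 0 < e & [set y | d x y < e] `<=` A.
Proof. by rewrite (proj2 hd x). Qed.

Lemma nbhs_ball x e : 0 < e -> nbhs x [set y | d x y < e].
Proof. by move=> e0; apply/nbhsP; exists e. Qed.

Lemma open_ball x e : open [set y | d x y < e].
Proof.
rewrite openE => y hy; apply/nbhsP; exists (e - d x y); first by rewrite subr_gt0.
move=> z /= hz; have := dtri x y z; move: hy hz.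
move: (d x y) (d y z) (d x z) => a b c; lra.
Qed.

Lemma compact_gen (K : set G) (u : nat -> G) (Q : R -> nat -> Prop) :
  compact K ->
  (forall e e' n, e <= e' -> Q e n -> Q e' n) ->
  (forall e, 0 < e -> forall N, exists2 n, (N <= n)%N & Q e n) ->
  (exists2 e0, 0 < e0 & forall n, Q e0 n -> K (u n)) ->
  exists y, K y /\ forall e r N, 0 < e -> 0 < r ->
    exists n, [/\ (N <= n)%N, Q e n & d y (u n) < r].
Proof.
move=> cK Qm Qf [e0 e00 QK].
pose D := [set p : R * nat | 0 < p.1].
pose B := fun p : R * nat => [set u n | n in [set n | (p.2 <= n)%N /\ Q p.1 n]].
have FF : Filter (filter_from D B).
  apply: filter_from_filter; first by exists (1, 0%N); rewrite /D /= ltr01.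
  move=> [e1 N1] [e2 N2]; rewrite /D /= => h1 h2.
  exists (Num.min e1 e2, maxn N1 N2); first by rewrite /D /= lt_min h1 h2.
  move=> _ [n [hn Qn] <-]; split; exists n => //; split => //=.
  - exact: leq_trans (leq_maxl N1 N2) hn.
  - by apply: Qm Qn; rewrite ge_min lexx.
  - exact: leq_trans (leq_maxr N1 N2) hn.
  - by apply: Qm Qn; rewrite ge_min lexx orbT.
have PF : ProperFilter (filter_from D B).
  apply: filter_from_proper => // -[e N]; rewrite /D /= => e1.
  by have [n Nn Qn] := Qf e e1 N; exists (u n); exists n.
have FK : filter_from D B K by exists (e0, 0%N) => // _ [n [_ Qn] <-]; exact: QK.
have [y [Ky cy]] := cK _ PF FK.
exists y; split => // e r N e1 r0.
have [z [[n [Nn Qn] <-] dz]] := cy (B (e, N)) [set z | d y z < r]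
  (ex_intro2 _ _ (e, N) e1 (fun _ h => h)) (nbhs_ball y r0).
by exists n.
Qed.

Lemma compact_clus (K : set G) (u : nat -> G) : compact K ->
  (forall n, K (u n)) -> exists y, K y /\ forall r N, 0 < r ->
    exists2 n, (N <= n)%N & d y (u n) < r.
Proof.
move=> cK Ku.
have [y [Ky h]] := @compact_gen K u (fun _ _ => True) cK
  (fun _ _ _ _ _ => I) (fun e _ N => ex_intro2 _ _ N (leqnn N) I)
  (ex_intro2 _ _ 1 ltr01 (fun n _ => Ku n)).
exists y; split => // r N r0; have [n [Nn _ dn]] := h 1 r N ltr01 r0.
by exists n.
Qed.

Lemma compact_pair (K1 K2 : set G) (u v : nat -> G) : compact K1 -> compact K2 ->
  (forall n, K1 (u n)) -> (forall n, K2 (v n)) ->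
  exists a b, [/\ K1 a, K2 b & forall r N, 0 < r ->
    exists n, [/\ (N <= n)%N, d a (u n) < r & d b (v n) < r]].
Proof.
move=> c1 c2 Ku Kv.
have [a [Ka ha]] := compact_clus c1 Ku.
have [b [Kb hb]] := @compact_gen K2 v (fun e n => d a (u n) < e) c2
  (fun e e' n ee' h => lt_le_trans h ee')
  (fun e e0 N => ha e N e0) (ex_intro2 _ _ 1 ltr01 (fun n _ => Kv n)).
exists a, b; split => // r N r0; have [n [Nn h1 h2]] := hb r r N r0 r0.
by exists n.
Qed.

Lemma compact_bounded (C : set G) : compact C ->
  exists M, forall x y, C x -> C y -> d x y <= M.
Proof.
move=> cC; case: (pselect (exists c, C c)) => [[c0 Cc0]|C0]; last first.
  by exists 0 => x y Cx; exfalso; apply: C0; exists x.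
suff [M hM] : exists M, forall x, C x -> d c0 x <= M.
  exists (M + M) => x y Cx Cy; apply: le_trans (dtri x c0 y) _.
  by rewrite dsym; apply: lerD; apply: hM.
apply: contrapT => hn.
have H : forall n : nat, exists x, C x /\ n%:R < d c0 x.
  move=> n; apply: contrapT => h; apply: hn; exists n%:R => x Cx.
  by rewrite leNgt; apply/negP => hx; apply: h; exists x.
pose u n := projT1 (cid (H n)).
have Cu n : C (u n) := proj1 (projT2 (cid (H n))).
have [y [Cy hy]] := compact_clus cC Cu.
have y0 : 0 <= d c0 y + 1 by apply: addr_ge0.
have [n Nn dn] := hy 1 (Num.Def.archi_bound (d c0 y + 1)) ltr01.
have h1 : n%:R < d c0 (u n) := proj2 (projT2 (cid (H n))).
have h2 := archi_boundP y0.
have h3 : (Num.Def.archi_bound (d c0 y + 1))%:R <= n%:R :> R by rewrite ler_nat.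
have := dtri c0 y (u n); move: h1 h2 h3 dn.
rewrite /u; move: (projT1 _) => w.
move: (n%:R) ((Num.Def.archi_bound (d c0 y + 1))%:R) => a b; lra.
Qed.

End Topo.
Section Topo2.
Variables (R : realType) (G : ptopologicalType) (d : G -> G -> R).
Hypothesis hd : metrizes d.

Let hm : metric_on [set: G] d := proj1 hd.
Let d00 x : d x x = 0. Proof. exact: (m_00 hm (I : setT x)). Qed.
Let dsym x y : d x y = d y x. Proof. exact: (m_sym hm (I : setT x) (I : setT y)). Qed.
Let dtri x y z : d x z <= d x y + d y z.
Proof. exact: (m_tri hm (I : setT x) (I : setT y) (I : setT z)). Qed.

Lemma lc_enlarge (C : set G) : locally_compact [set: G] -> compact C ->
  exists2 e, 0 < e & exists2 K, compact K & enlarge d C e `<=` K.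
Proof.
move=> hLC cC.
have hx : forall x, exists r, 0 < r /\ exists U, compact U /\
    [set y | d x y < r + r] `<=` U.
  move=> x; have [U hU [cU _]] := hLC x I.
  have [e e0 he] := (nbhsP hd x _).1 hU.
  exists (e / 2); split; first lra.
  exists U; split => // y hy; apply: (he y) => //=.
  move: hy => /= hy; lra.
have [rr hrr] : exists rr : G -> R, forall x, 0 < rr x /\ exists U, compact U /\
    [set y | d x y < rr x + rr x] `<=` U.
  by exists (fun x => projT1 (cid (hx x))) => x; exact: projT2 (cid (hx x)).
have [UU hUU] : exists UU : G -> set G, forall x, compact (UU x) /\
    [set y | d x y < rr x + rr x] `<=` UU x.
  by exists (fun x => projT1 (cid (proj2 (hrr x)))) => x;
    exact: projT2 (cid (proj2 (hrr x))).
have cC2 : cover_compact C by rewrite -compact_cover.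
have covC : C `<=` cover C (fun x => [set y | d x y < rr x]).
  move=> c Cc; exists c => //=; rewrite d00; exact: (proj1 (hrr c)).
have [D' sD' cD'] := cC2 G C (fun x => [set y | d x y < rr x])
  (fun i _ => open_ball hd i (rr i)) covC.
have [e [e0 [K [cK hK]]]] : exists e, 0 < e /\ exists K, compact K /\
    forall x, x \in finmap.enum_fset D' -> e <= rr x /\ UU x `<=` K.
  elim: (finmap.enum_fset D') => [|a s [e [e0 [K [cK hK]]]]].
    exists 1; split; first exact: ltr01.
    by exists set0; split; first exact: compact0.
  exists (Num.min e (rr a)); split; first by rewrite lt_min e0 (proj1 (hrr a)).
  exists (UU a `|` K); split; first exact: compactU (proj1 (hUU a)) cK.
  move=> x; rewrite inE => /orP [/eqP ->|xs].
    by split; [rewrite ge_min lexx orbT|move=> y hy; left].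
  have [h1 h2] := hK x xs; split; first by rewrite ge_min h1.
  by move=> y hy; right; apply: h2.
exists e => //; exists K => // y; rewrite /enlarge /= => -[c Cc dyc].
have [x Dx dxc] := cD' c Cc.
have [h1 h2] := hK x Dx.
apply: h2; apply: (proj2 (hUU x)) => /=.
have := dtri x c y; rewrite (dsym c y); move: dxc dyc h1 => /=.
move: (d x c) (d y c) (d x y) (rr x) => a b f g; lra.
Qed.

Lemma haus_eq (G' : topologicalType) (f : G -> G') : continuous f ->
  hausdorff_space G' -> forall a b,
  (forall r, 0 < r -> exists z w, [/\ d a z < r, d b w < r & f z = f w]) ->
  f a = f b.
Proof.
move=> hf hH a b h; apply: hH => A B nA nB.
have /(nbhsP hd) [ra ra0 ha] := hf a A nA.
have /(nbhsP hd) [rb rb0 hb] := hf b B nB.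
have [z [w [dz dw e]]] := h (Num.min ra rb) ltac:(by rewrite lt_min ra0 rb0).
exists (f z); split; first by apply: ha; move: dz; rewrite lt_min => /andP[].
by rewrite e; apply: hb; move: dw; rewrite lt_min => /andP[].
Qed.

Lemma mul_cont (Γ : groupoid G)
  (hc : {within composable_pairs Γ, continuous (fun p => g_mul Γ p.1 p.2)})
  x y : composable Γ x y -> forall e, 0 < e -> exists2 del, 0 < del &
    forall x' y', composable Γ x' y' -> d x x' < del -> d y y' < del ->
      d (g_mul Γ x y) (g_mul Γ x' y') < e.
Proof.
move=> cxy e e0.
move: hc; rewrite continuous_subspace_in => hc.
have := hc (x, y) (mem_set cxy) _ (nbhs_ball hd (g_mul Γ x y) e0).
move/(@nbhs_subspace_ex _ (composable_pairs Γ) _ (x, y) cxy) => [V [[P Q] [nP nQ] hPQ] hV].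
have [r1 r10 h1] := (nbhsP hd x _).1 nP.
have [r2 r20 h2] := (nbhsP hd y _).1 nQ.
exists (Num.min r1 r2); first by rewrite lt_min r10 r20.
move=> x' y' cxy' dx dy.
have : (V `&` composable_pairs Γ) (x', y').
  split => //; apply: hPQ; split.
    by apply: h1; move: dx; rewrite lt_min => /andP[].
  by apply: h2; move: dy; rewrite lt_min => /andP[].
by rewrite -hV => -[].
Qed.

End Topo2.
Section GAlg.
Variables (X : Type) (Γ : groupoid X).
Hypothesis hΓ : is_groupoid Γ.
Local Notation r := (g_r Γ).
Local Notation s := (g_s Γ).
Local Notation m := (g_mul Γ).
Local Notation i := (g_inv Γ).

Lemma unit_r x : g_unit Γ (r x). Proof. by case: hΓ => h _; case: (h x). Qed.
Lemma unit_s x : g_unit Γ (s x). Proof. by case: hΓ => h _; case: (h x). Qed.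
Lemma r_unit u : g_unit Γ u -> r u = u.
Proof. by case: hΓ => _ [h _] /h []. Qed.
Lemma s_unit u : g_unit Γ u -> s u = u.
Proof. by case: hΓ => _ [h _] /h []. Qed.
Lemma r_mul x y : composable Γ x y -> r (m x y) = r x.
Proof. by case: hΓ => _ [_ [h _]] /h []. Qed.
Lemma s_mul x y : composable Γ x y -> s (m x y) = s y.
Proof. by case: hΓ => _ [_ [h _]] /h []. Qed.
Lemma g_assoc x y z : composable Γ x y -> composable Γ y z ->
  m (m x y) z = m x (m y z).
Proof. by case: hΓ => _ [_ [_ [h _]]]; apply: h. Qed.
Lemma mul_r x : m (r x) x = x. Proof. by case: hΓ => _ [_ [_ [_ [h _]]]]; case: (h x). Qed.
Lemma mul_s x : m x (s x) = x. Proof. by case: hΓ => _ [_ [_ [_ [h _]]]]; case: (h x). Qed.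
Lemma r_inv x : r (i x) = s x. Proof. by case: hΓ => _ [_ [_ [_ [_ h]]]]; case: (h x). Qed.
Lemma s_inv x : s (i x) = r x. Proof. by case: hΓ => _ [_ [_ [_ [_ h]]]]; case: (h x). Qed.
Lemma mul_inv x : m x (i x) = r x. Proof. by case: hΓ => _ [_ [_ [_ [_ h]]]]; case: (h x). Qed.
Lemma inv_mul x : m (i x) x = s x. Proof. by case: hΓ => _ [_ [_ [_ [_ h]]]]; case: (h x). Qed.

Lemma comp_r x : composable Γ (r x) x.
Proof. by rewrite /composable s_unit //; exact: unit_r. Qed.

Lemma lcancel x y z : composable Γ x y -> composable Γ x z -> m x y = m x z ->
  y = z.
Proof.
move=> cy cz e.
have ci : composable Γ (i x) x by rewrite /composable s_inv.
have hy : m (i x) (m x y) = y by rewrite -g_assoc // inv_mul cy mul_r.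
have hz : m (i x) (m x z) = z by rewrite -g_assoc // inv_mul cz mul_r.
by rewrite -hy e hz.
Qed.

Lemma inv_inv x : i (i x) = x.
Proof.
apply: (@lcancel (i x)); rewrite /composable ?r_inv ?s_inv //.
by rewrite mul_inv inv_mul r_inv.
Qed.

Lemma idem_unit e : composable Γ e e -> m e e = e -> g_unit Γ e.
Proof.
move=> ce h.
have : e = s e.
  apply: (@lcancel e) => //; first by rewrite /composable r_unit //; exact: unit_s.
  by rewrite h mul_s.
by move=> ->; exact: unit_s.
Qed.

End GAlg.

Section MorAlg.
Variables (X Y : Type) (Γ : groupoid X) (Γ' : groupoid Y) (pi : X -> Y).
Hypothesis hΓ : is_groupoid Γ.
Hypothesis hΓ' : is_groupoid Γ'.
Hypothesis hmor : groupoid_morphism_on Γ Γ' setT pi.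
Hypothesis hinj : forall a b, g_r Γ a = g_r Γ b -> pi a = pi b -> a = b.
Hypothesis hlift : forall u, g_unit Γ u -> forall y, g_r Γ' y = pi u ->
  exists b, g_r Γ b = u /\ pi b = y.
Local Notation r := (g_r Γ).
Local Notation s := (g_s Γ).
Local Notation m := (g_mul Γ).
Local Notation i := (g_inv Γ).
Local Notation r' := (g_r Γ').
Local Notation s' := (g_s Γ').
Local Notation m' := (g_mul Γ').
Local Notation i' := (g_inv Γ').

Lemma pcomp a b : composable Γ a b -> composable Γ' (pi a) (pi b).
Proof. by move=> h; case: (hmor I I h). Qed.
Lemma pmul a b : composable Γ a b -> pi (m a b) = m' (pi a) (pi b).
Proof. by move=> h; case: (hmor I I h). Qed.

Lemma punit u : g_unit Γ u -> g_unit Γ' (pi u).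
Proof.
move=> hu; have cu : composable Γ u u by rewrite /composable s_unit ?r_unit.
apply: (idem_unit hΓ'); first exact: pcomp.
by rewrite -pmul // -{3}(mul_r hΓ u) r_unit.
Qed.

Lemma pr x : pi (r x) = r' (pi x).
Proof.
have h : pi x = m' (pi (r x)) (pi x) by rewrite -pmul ?mul_r //; exact: comp_r.
rewrite {1}h r_mul //; last by apply: pcomp; exact: comp_r.
by rewrite (r_unit hΓ') //; apply: punit; exact: unit_r.
Qed.

Lemma pinv x : pi (i x) = i' (pi x).
Proof.
have cx : composable Γ x (i x) by rewrite /composable r_inv.
apply: (@lcancel _ _ hΓ' (pi x)); first exact: pcomp.
  by rewrite /composable r_inv.
by rewrite -pmul // mul_inv // mul_inv // pr.
Qed.

Lemma ps x : pi (s x) = s' (pi x).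
Proof. by rewrite -(r_inv hΓ) pr pinv r_inv. Qed.

Lemma unit_pre w : g_unit Γ' (pi w) -> g_unit Γ w.
Proof.
move=> h; have : r w = w.
  apply: hinj; first by rewrite r_unit //; exact: unit_r.
  by rewrite pr r_unit.
by move=> <-; exact: unit_r.
Qed.

Lemma fib_r y : pfiber pi (r' y) = r @` pfiber pi y.
Proof.
apply/seteqP; split => [w /= hw|_ [x hx <-]]; last by rewrite /pfiber /= pr hx.
have uw : g_unit Γ w by apply: unit_pre; rewrite hw; exact: unit_r.
have [b [rb pb]] := @hlift w uw y (esym hw).
by exists b.
Qed.

Lemma fib_i y : pfiber pi (i' y) = i @` pfiber pi y.
Proof.
apply/seteqP; split => [z /= hz|_ [x hx <-]]; last by rewrite /pfiber /= pinv hx.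
exists (i z); last exact: inv_inv.
by rewrite /pfiber /= pinv hz inv_inv.
Qed.

Lemma fib_s y : pfiber pi (s' y) = s @` pfiber pi y.
Proof.
apply/seteqP; split => [w|_ [x hx <-]]; last by rewrite /pfiber /= ps hx.
rewrite -(r_inv hΓ') fib_r fib_i => -[_ [x hx <-] <-].
by exists x => //; rewrite r_inv.
Qed.

Lemma fib_mul x y c : composable Γ' x y -> pi c = m' x y ->
  exists a b, [/\ pi a = x, pi b = y, composable Γ a b & c = m a b].
Proof.
move=> cxy hc.
have ur : g_unit Γ (r c) := unit_r hΓ c.
have ex : r' x = pi (r c) by rewrite pr hc r_mul.
have [a [ra pa]] := @hlift (r c) ur x ex.
have cac : composable Γ (i a) c by rewrite /composable (s_inv hΓ) ra.
exists a, (m (i a) c); split => //.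
- rewrite pmul // pinv pa hc -g_assoc //; last by rewrite /composable s_inv.
  by rewrite (inv_mul hΓ') cxy (mul_r hΓ').
- by rewrite /composable r_mul // r_inv.
- by rewrite -g_assoc ?mul_inv ?ra ?mul_r // /composable r_inv.
Qed.

Lemma Hp_r y : Hprime pi y -> Hprime pi (r' y).
Proof.
move=> [x1 [x2 [h1 h2 n12]]]; exists (r x1), (r x2); split; rewrite ?pr ?h1 ?h2 //.
by move=> e; apply: n12; apply: hinj => //; rewrite h1 h2.
Qed.

Lemma Hp_i y : Hprime pi y -> Hprime pi (i' y).
Proof.
move=> [x1 [x2 [h1 h2 n12]]]; exists (i x1), (i x2); split; rewrite ?pinv ?h1 ?h2 //.
by move=> e; apply: n12; rewrite -(inv_inv hΓ x1) e inv_inv.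
Qed.

Lemma Hp_s y : Hprime pi y -> Hprime pi (s' y).
Proof. by move=> h; rewrite -(r_inv hΓ'); apply: Hp_r; apply: Hp_i. Qed.

Lemma Hp_mul x y : Hprime pi x -> composable Γ' x y -> Hprime pi (m' x y).
Proof.
move=> [x1 [x2 [h1 h2 n12]]] cxy.
have e1 : r' y = pi (s x1) by rewrite -cxy ps h1.
have e2 : r' y = pi (s x2) by rewrite -cxy ps h2.
have [b1 [rb1 pb1]] := @hlift (s x1) (unit_s hΓ x1) y e1.
have [b2 [rb2 pb2]] := @hlift (s x2) (unit_s hΓ x2) y e2.
exists (m x1 b1), (m x2 b2); split; rewrite ?pmul ?h1 ?h2 ?pb1 ?pb2 //;
  try by rewrite /composable rb1 // rb2.
move=> e; apply: n12; apply: hinj; last by rewrite h1 h2.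
by rewrite -(r_mul hΓ (esym rb1)) e r_mul.
Qed.

End MorAlg.
Section Main.
Variables (R : realType) (G G' : ptopologicalType) (Γ : groupoid G)
  (Γ' : groupoid G') (dG : G -> G -> R) (pi : G -> G').
Hypothesis hΓ : is_groupoid Γ.
Hypothesis hΓ' : is_groupoid Γ'.
Hypothesis hGH : hausdorff_space G.
Hypothesis hG'H : hausdorff_space G'.
Hypothesis hLC : locally_compact [set: G].
Hypothesis hmulc : {within composable_pairs Γ, continuous (fun p => g_mul Γ p.1 p.2)}.
Hypothesis hdG : metrizes dG.
Hypothesis hdinv : forall x y, dG (g_inv Γ x) (g_inv Γ y) = dG x y.
Hypothesis hdr : forall x y, dG (g_r Γ x) (g_r Γ y) <= dG x y.
Hypothesis hds : forall x y, dG (g_s Γ x) (g_s Γ y) <= dG x y.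
Hypothesis hpi_cont : continuous pi.
Hypothesis hpi_proper : proper_map pi.
Hypothesis hpi_mor : groupoid_morphism_on Γ Γ' setT pi.
Hypothesis hinj : forall a b, g_r Γ a = g_r Γ b -> pi a = pi b -> a = b.
Hypothesis hlift : forall u, g_unit Γ u -> forall y, g_r Γ' y = pi u ->
  exists b, g_r Γ b = u /\ pi b = y.
Hypothesis hpi_reg : regular_map dG pi.

Local Notation d := dG.
Local Notation fib := (pfiber pi).
Local Notation H' := (Hprime pi).
Local Notation dH' := (dHprime dG pi).

Let hm : metric_on [set: G] d := proj1 hdG.
Let d00 x : d x x = 0. Proof. exact: (m_00 hm (I : setT x)). Qed.
Let dsym x y : d x y = d y x. Proof. exact: (m_sym hm (I : setT x) (I : setT y)). Qed.
Let dtri x y z : d x z <= d x y + d y z.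
Proof. exact: (m_tri hm (I : setT x) (I : setT y) (I : setT z)). Qed.
Let dge0 x y : 0 <= d x y. Proof. exact: (m_ge0 hm (I : setT x) (I : setT y)). Qed.
Let deq x y : d x y = 0 -> x = y. Proof. exact: (m_eq hm (I : setT x) (I : setT y)). Qed.

Lemma fib_compact y : compact (fib y).
Proof. exact: (hpi_proper (@compact_set1 G' y)). Qed.

Lemma fib_closed y : closed (fib y).
Proof. by apply: compact_closed => //; exact: (@fib_compact y). Qed.

Lemma fib_bounded y : exists M, forall a b, fib y a -> fib y b -> d a b <= M.
Proof.
exact (compact_bounded hdG (@fib_compact y)). Qed.

Lemma closed_near (A : set G) : closed A -> forall y,
  (forall r, 0 < r -> exists c, A c /\ d y c < r) -> A y.
Proof.
move=> cA y h; apply: cA => B nB; have [r r0 hr] := (nbhsP hdG _ _).1 nB.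
by have [c [Ac dc]] := h r r0; exists c; split => //; exact: hr.
Qed.

Lemma Hp_ne y : H' y -> exists x, pi x = y.
Proof. by move=> [x1 [x2 [h1 _ _]]]; exists x1. Qed.

Lemma HSfib x y : (exists a, pi a = x) -> (exists b, pi b = y) ->
  HS d (fib x) (fib y) !=set0.
Proof.
move=> [a ha] [b hb].
have [M hM] := compact_bounded hdG (compactU (@fib_compact x) (@fib_compact y)).
exists (M + 1); apply: (HS_bound hm); [by exists a|by exists b|].
by move=> u v hu hv; apply: hM.
Qed.

Lemma HSfibH x y : H' x -> H' y -> HS d (fib x) (fib y) !=set0.
Proof. by move=> /Hp_ne hx /Hp_ne hy; exact: HSfib. Qed.

Lemma dH'_ge0 x y : 0 <= dH' x y.
Proof. exact: hdist_ge0. Qed.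

Lemma dH'_sym x y : dH' x y = dH' y x.
Proof. exact: hdist_sym. Qed.

Lemma dH'_tri x y z : H' x -> H' y -> H' z -> dH' x z <= dH' x y + dH' y z.
Proof. by move=> hx hy hz; apply: (hdist_tri hm); apply: HSfibH. Qed.

Lemma dH'_near x y e : H' x -> H' y -> dH' x y < e ->
  exists2 t, t < e & (fib y `<=` enlarge d (fib x) t /\ fib x `<=` enlarge d (fib y) t).
Proof.
move=> hx hy h; have [t [t0 [h1 h2]] te] := hdist_lt (HSfibH hx hy) h.
by exists t.
Qed.

Lemma dH'_metric : metric_on H' dH'.
Proof.
move=> x y z hx hy hz; split.
- exact: hdist_refl.
- move=> h0; have [b hb] := Hp_ne hy.
  suff : fib x b by rewrite /pfiber /= => <-.
  apply: closed_near; first exact: fib_closed.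
  move=> r r0; have [t tr [h1 _]] := dH'_near hx hy (ltac:(by rewrite h0) : dH' x y < r).
  have [c hc dc] := h1 b hb; exists c; split => //; exact: lt_trans tr.
- exact: dH'_sym.
- exact: dH'_tri.
Qed.

Local Notation dH := (dH dG pi).
Local Notation H := (pi @^-1` H').

Lemma dH_ge_d x y : d x y <= dH x y.
Proof. by rewrite /Defs.dH lerDl dH'_ge0. Qed.

Lemma dH_ge_dH' x y : dH' (pi x) (pi y) <= dH x y.
Proof. by rewrite /Defs.dH lerDr dge0. Qed.

Lemma dH_metric : metric_on H dH.
Proof.
move=> x y z hx hy hz; rewrite /Defs.dH; split.
- by rewrite d00 /dHprime (hdist_refl hm) addr0.
- move=> h0; apply: deq; apply/le_anti; rewrite dge0 andbT.
  by rewrite -h0 lerDl dH'_ge0.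
- by rewrite dsym dH'_sym.
- have := dtri x y z; have := dH'_tri hx hy hz.
  move: (d x y) (d y z) (d x z) (dH' (pi x) (pi y)) (dH' (pi y) (pi z))
    (dH' (pi x) (pi z)) => a b c e f g; lra.
Qed.


Lemma nbhs_pre x (U : set G') : open U -> U (pi x) ->
  exists2 r, 0 < r & forall y, d x y < r -> U (pi y).
Proof.
move=> oU Ux; have nU : nbhs (pi x) U by move: oU; rewrite openE => /(_ _ Ux).
have := hpi_cont nU => /(nbhsP hdG) [r r0 hr].
by exists r => // y /hr.
Qed.

Lemma clusH' x : H' x -> exists2 eps, 0 < eps & forall u : nat -> G',
  (forall n, H' (u n) /\ dH' x (u n) <= eps) ->
  exists y, [/\ H' y, dH' x y <= eps & mclus dH' u y].
Proof.
move=> hx; have [x1 [x2 [h1 h2 n12]]] := hx.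
set D := d x1 x2.
have D0 : 0 < D.
  rewrite lt_neqAle dge0 andbT; apply/eqP => e; apply: n12; apply: deq.
  by rewrite e.
have [e0 e00 [K0 cK0 hK0]] := lc_enlarge hdG hLC (@fib_compact x).
exists (Num.min (e0 / 2) (D / 8)); first by rewrite lt_min; apply/andP; split; lra.
set eps := Num.min (e0 / 2) (D / 8) => u hu.
have epsl1 : eps <= e0 / 2 by rewrite ge_min lexx.
have epsl2 : eps <= D / 8 by rewrite ge_min lexx orbT.
have eps0 : 0 < eps by rewrite lt_min; apply/andP; split; lra.
have DE : d x1 x2 = D by [].
clearbody eps D.
have Hab : forall n, exists ab : G * G, [/\ pi ab.1 = u n, pi ab.2 = u n,
    d x1 ab.1 < eps + eps & d x2 ab.2 < eps + eps].
  move=> n; have [hn dn] := hu n.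
  have [t te [_ hsub]] := dH'_near hx hn (ltac:(lra) : dH' x (u n) < eps + eps).
  have [a ha da] := hsub x1 h1; have [b hb db] := hsub x2 h2.
  exists (a, b); split => //=; exact: lt_trans te.
pose a_ n := (projT1 (cid (Hab n))).1.
pose b_ n := (projT1 (cid (Hab n))).2.
have Hab' n : [/\ pi (a_ n) = u n, pi (b_ n) = u n,
    d x1 (a_ n) < eps + eps & d x2 (b_ n) < eps + eps] := projT2 (cid (Hab n)).
have Ka n : K0 (a_ n).
  have [_ _ h _] := Hab' n; apply: hK0; exists x1 => //; rewrite dsym; lra.
have Kb n : K0 (b_ n).
  have [_ _ _ h] := Hab' n; apply: hK0; exists x2 => //; rewrite dsym; lra.
have dab n : D / 2 < d (a_ n) (b_ n).
  have [_ _ ha hb] := Hab' n.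
  have := dtri x1 (a_ n) x2; have := dtri (a_ n) (b_ n) x2.
  rewrite (dsym (b_ n) x2) DE.
  move: ha hb; move: (d x1 (a_ n)) (d x2 (b_ n)) (d (a_ n) (b_ n))
    (d (a_ n) x2) => p q r t; lra.
have [a [b [_ _ hab]]] := compact_pair hdG cK0 cK0 Ka Kb.
have pab : pi a = pi b.
  apply: (haus_eq hdG hpi_cont hG'H) => r r0.
  have [n [_ da db]] := hab r 0%N r0.
  exists (a_ n), (b_ n); split => //.
  by have [-> -> _ _] := Hab' n.
have nab : a <> b.
  move=> e; rewrite -{}e in hab; have D80 : 0 < D / 8 by lra.
  have [n [_ da db]] := hab (D / 8) 0%N D80.
  have := dab n; have := dtri (a_ n) a (b_ n); rewrite (dsym (a_ n) a).
  move: da db; move: (d a (a_ n)) (d a (b_ n)) (d (a_ n) (b_ n)) => p q r'.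
  lra.
have hy : H' (pi a) by exists a, b; split.
have clus : mclus dH' u (pi a).
  move=> eta eta0 N.
  have eta'0 : 0 < Num.min eta (D / 2) by rewrite lt_min; apply/andP; split; lra.
  have [U [oU Ua hU]] := hpi_reg hy eta'0.
  have [r r0 hr] := nbhs_pre oU Ua.
  have [n [Nn da _]] := hab r N r0.
  exists n => //.
  have [pa _ _ _] := Hab' n.
  case: (hU (u n)); first by rewrite -pa; apply: hr.
    move=> h; apply: lt_le_trans h _; rewrite ge_min lexx //.
  move=> h; exfalso.
  have [M hM] := fib_bounded (u n).
  have := diam_ge (ex_intro _ M hM) (_ : fib (u n) (a_ n)) (_ : fib (u n) (b_ n)).
  have [p1 p2 _ _] := Hab' n.
  move=> /(_ p1 p2) hd; have := dab n.
  have : Num.min eta (D / 2) <= D / 2 by rewrite ge_min lexx orbT.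
  move: h hd; move: (diam d (fib (u n))) (Num.min eta (D / 2)) (d (a_ n) (b_ n)).
  move=> p q s; lra.
exists (pi a); split => //.
apply/ler_addgt0Pr => ee ee0.
have [n _ dn] := clus ee ee0 0%N.
have [hn dxn] := hu n.
have := dH'_tri hx hn hy; rewrite (dH'_sym (u n)).
move: dn dxn; move: (dH' (pi a) (u n)) (dH' x (u n)) (dH' x (pi a)) => p q s; lra.
Qed.


Lemma lift_clus y (u : nat -> G) : H' y -> mclus dH' (fun n => pi (u n)) y ->
  exists z, pi z = y /\ forall e r N, 0 < e -> 0 < r ->
    exists n, [/\ (N <= n)%N, dH' y (pi (u n)) < e & d z (u n) < r].
Proof.
move=> hy cl.
have [e0 e00 [K0 cK0 hK0]] := lc_enlarge hdG hLC (@fib_compact y).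
have hne n : HS d (fib y) (fib (pi (u n))) !=set0.
  by apply: HSfib; [exact: Hp_ne|exists (u n)].
have inK : forall n, dH' y (pi (u n)) < e0 -> K0 (u n).
  move=> n hn; have [t [_ [ht _]] tr] := hdist_lt (hne n) hn.
  have [c hc dc] := ht (u n) erefl.
  by apply: hK0; exists c => //; exact: lt_trans tr.
have [z [Kz hz]] := @compact_gen _ _ _ hdG K0 u (fun e n => dH' y (pi (u n)) < e)
  cK0 (fun e e' n ee' h => lt_le_trans h ee') (fun e e1 N => cl e e1 N)
  (ex_intro2 _ _ e0 e00 inK).
exists z; split => //.
suff : fib y z by [].
apply: (@closed_near (fib y)); first exact: fib_closed.
move=> r r0; have r20 : 0 < r / 2 by lra.
have [n [_ h1 h2]] := hz (r / 2) (r / 2) 0%N r20 r20.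
have [t [_ [ht _]] tr] := hdist_lt (hne n) h1.
have [c hc dc] := ht (u n) erefl.
exists c; split => //; have := dtri z (u n) c.
move: h2 dc tr; clear ht; move: (d z (u n)) (d (u n) c) (d z c) t => p q s t'; lra.
Qed.

Lemma r_unif y g : 0 < g -> exists2 del, 0 < del & forall b b1,
  fib y b -> fib y b1 -> d (g_r Γ b) (g_r Γ b1) < del -> d b b1 < g.
Proof.
move=> g0; apply: contrapT => hn.
have H1 : forall n : nat, exists p : G * G, [/\ fib y p.1, fib y p.2,
    d (g_r Γ p.1) (g_r Γ p.2) < n.+1%:R^-1 & ~ d p.1 p.2 < g].
  move=> n; apply: contrapT => h; apply: hn; exists n.+1%:R^-1.
    by rewrite invr_gt0 ltr0Sn.
  move=> b b1 hb hb1 dr; apply: contrapT => h2; apply: h; by exists (b, b1).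
pose u n := (projT1 (cid (H1 n))).1.
pose v n := (projT1 (cid (H1 n))).2.
have Huv n : [/\ fib y (u n), fib y (v n), d (g_r Γ (u n)) (g_r Γ (v n)) < n.+1%:R^-1
  & ~ d (u n) (v n) < g] := projT2 (cid (H1 n)).
have Ku n : fib y (u n) by case: (Huv n).
have Kv n : fib y (v n) by case: (Huv n).
have [b [b1 [Kb Kb1 hbb]]] := compact_pair hdG (@fib_compact y) (@fib_compact y) Ku Kv.
have rr : g_r Γ b = g_r Γ b1.
  apply: deq; apply/le_anti; rewrite dge0 andbT; apply/ler_addgt0Pr => e e0.
  rewrite add0r; have e30 : 0 < e / 3 by lra.
  have [N HN] := archi1 e30.
  have [n [Nn db db1]] := hbb (e / 3) N e30.
  have [_ _ hr _] := Huv n; have := HN n Nn.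
  have := dtri (g_r Γ b) (g_r Γ (u n)) (g_r Γ b1).
  have := dtri (g_r Γ (u n)) (g_r Γ (v n)) (g_r Γ b1).
  have := hdr b (u n); have := hdr (v n) b1; rewrite (dsym (v n) b1).
  move: db db1 hr; move: (n.+1%:R^-1) => w.
  move: (d (g_r Γ b) (g_r Γ b1)) (d (g_r Γ b) (g_r Γ (u n))) (d (g_r Γ (u n)) (g_r Γ b1))
    (d (g_r Γ (u n)) (g_r Γ (v n))) (d (g_r Γ (v n)) (g_r Γ b1)) (d b (u n)) (d b1 (v n)).
  move=> p1 p2 p3 p4 p5 p6 p7; lra.
have bb : b = b1 by apply: hinj => //; rewrite Kb Kb1.
rewrite -bb in hbb; have g20 : 0 < g / 2 by lra.
have [n [_ d1 d2]] := hbb (g / 2) 0%N g20.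
have [_ _ _ hn'] := Huv n; apply: hn'.
have := dtri (u n) b (v n); rewrite (dsym (u n) b).
move: d1 d2; move: (d b (u n)) (d b (v n)) (d (u n) (v n)) => p q s; lra.
Qed.

Lemma mul_unif (E F : set G) : compact E -> compact F -> forall g, 0 < g ->
  exists2 del, 0 < del & forall a b a' b', E a -> F b -> composable Γ a b ->
    composable Γ a' b' -> d a a' < del -> d b b' < del ->
    d (g_mul Γ a b) (g_mul Γ a' b') < g.
Proof.
move=> cE cF g g0; apply: contrapT => hn.
have H1 : forall n : nat, exists p : (G * G) * (G * G),
    [/\ E p.1.1, F p.1.2, composable Γ p.1.1 p.1.2, composable Γ p.2.1 p.2.2 &
    [/\ d p.1.1 p.2.1 < n.+1%:R^-1, d p.1.2 p.2.2 < n.+1%:R^-1 &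
    ~ d (g_mul Γ p.1.1 p.1.2) (g_mul Γ p.2.1 p.2.2) < g]].
  move=> n; apply: contrapT => h; apply: hn; exists n.+1%:R^-1.
    by rewrite invr_gt0 ltr0Sn.
  move=> a b a' b' Ea Fb cab cab' da db; apply: contrapT => h2; apply: h.
  by exists ((a, b), (a', b')).
pose P n := projT1 (cid (H1 n)).
have HP n := projT2 (cid (H1 n)).
have Ku n : E (P n).1.1 by case: (HP n).
have Kv n : F (P n).1.2 by case: (HP n).
have [a [b [Ea Fb hab]]] := compact_pair hdG cE cF Ku Kv.
have cab : composable Γ a b.
  rewrite /composable; apply: deq; apply/le_anti; rewrite dge0 andbT.
  apply/ler_addgt0Pr => e e0; rewrite add0r; have e20 : 0 < e / 2 by lra.
  have [n [_ da db]] := hab (e / 2) 0%N e20.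
  have [_ _ cn _ _] := HP n.
  have := dtri (g_s Γ a) (g_s Γ (P n).1.1) (g_r Γ b).
  have := hds a (P n).1.1; have := hdr (P n).1.2 b.
  rewrite cn (dsym (P n).1.2 b).
  move: da db; move: (d (g_s Γ a) (g_r Γ b)) (d (g_s Γ a) (g_r Γ (P n).1.2))
    (d (g_r Γ (P n).1.2) (g_r Γ b)) (d a (P n).1.1) (d b (P n).1.2).
  move=> p1 p2 p3 p4 p5; lra.
have g20 : 0 < g / 2 by lra.
have [del0 del00 hc] := mul_cont hdG hmulc cab g20.
have del20 : 0 < del0 / 2 by lra.
have [N HN] := archi1 del20.
have [n [Nn da db]] := hab (del0 / 2) N del20.
have [_ _ cn cn' [d1 d2 hng]] := HP n.
apply: hng.
have h1 := hc _ _ cn (ltac:(lra) : d a (P n).1.1 < del0) (ltac:(lra) : d b (P n).1.2 < del0).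
have hN := HN n Nn.
have h2 : d (g_mul Γ a b) (g_mul Γ (P n).2.1 (P n).2.2) < g / 2.
  apply: hc => //.
    have := dtri a (P n).1.1 (P n).2.1; move: da d1 hN.
    move: (n.+1%:R^-1) (d a (P n).1.1) (d (P n).1.1 (P n).2.1) (d a (P n).2.1).
    move=> p q s t; lra.
  have := dtri b (P n).1.2 (P n).2.2; move: db d2 hN.
  move: (n.+1%:R^-1) (d b (P n).1.2) (d (P n).1.2 (P n).2.2) (d b (P n).2.2).
  move=> p q s t; lra.
have := dtri (g_mul Γ (P n).1.1 (P n).1.2) (g_mul Γ a b) (g_mul Γ (P n).2.1 (P n).2.2).
rewrite (dsym _ (g_mul Γ a b)); move: h1 h2.
move: (d (g_mul Γ a b) (g_mul Γ (P n).1.1 (P n).1.2))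
  (d (g_mul Γ a b) (g_mul Γ (P n).2.1 (P n).2.2))
  (d (g_mul Γ (P n).1.1 (P n).1.2) (g_mul Γ (P n).2.1 (P n).2.2)) => p q s; lra.
Qed.


Let Ps := ps hΓ hΓ' hpi_mor.
Let Pmul := pmul hpi_mor.
Let fibmul := fib_mul hΓ hΓ' hpi_mor hlift.

Lemma mulH'_cont x y : H' x -> H' y -> composable Γ' x y ->
  forall eps, 0 < eps -> exists2 del, 0 < del & forall x2 y2,
    H' x2 -> H' y2 -> composable Γ' x2 y2 -> dH' x x2 < del -> dH' y y2 < del ->
    dH' (g_mul Γ' x y) (g_mul Γ' x2 y2) < eps.
Proof.
move=> hx hy cxy eps eps0.
have g0 : 0 < eps / 2 by lra.
have [del2 del20 hU2] := mul_unif (@fib_compact x) (@fib_compact y) g0.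
have del220 : 0 < del2 / 2 by lra.
have [del1 del10 hU1] := r_unif y del220.
exists (Num.min (del2 / 2) (del1 / 2)); first by rewrite lt_min; apply/andP; split; lra.
move=> x2 y2 hx2 hy2 cxy2.
have dl1 : Num.min (del2 / 2) (del1 / 2) <= del2 / 2 by rewrite ge_min lexx.
have dl2 : Num.min (del2 / 2) (del1 / 2) <= del1 / 2 by rewrite ge_min lexx orbT.
move: (Num.min (del2 / 2) (del1 / 2)) dl1 dl2 => del dl1 dl2 dx dy.
have [t1 t1d [s1 s1']] := dH'_near hx hx2 dx.
have [t2 t2d [s2 s2']] := dH'_near hy hy2 dy.
have t10 : 0 <= t1.
  have [a ha] := Hp_ne hx; have [c _ dc] := s1' a ha.
  exact: le_trans (dge0 a c) (ltW dc).
have t20 : 0 <= t2.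
  have [a ha] := Hp_ne hy; have [c _ dc] := s2' a ha.
  exact: le_trans (dge0 a c) (ltW dc).
apply: (@le_lt_trans _ _ (eps / 2)); last lra.
apply: hdist_le; split => //; split.
- move=> c hc; have [a2 [b2 [pa2 pb2 cab2 ->]]] := fibmul cxy2 hc.
  have [a ha da] := s1 a2 pa2.
  have [b hb db] := s2 b2 pb2.
  have ey : g_r Γ' y = pi (g_s Γ a) by rewrite Ps ha cxy.
  have [b1 [rb1 pb1]] := @hlift (g_s Γ a) (unit_s hΓ a) y ey.
  have drb : d (g_r Γ b1) (g_r Γ b) < del1.
    rewrite rb1; have := dtri (g_s Γ a) (g_s Γ a2) (g_r Γ b).
    have := hds a a2; have := hdr b2 b; rewrite cab2 (dsym a a2).
    move: da db t1d t2d dl2.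
    move: (d (g_s Γ a) (g_r Γ b)) (d (g_s Γ a) (g_r Γ b2)) (d (g_r Γ b2) (g_r Γ b))
      (d a2 a) (d b2 b) => p1 p2 p3 p4 p5; lra.
  have db1 := hU1 b1 b pb1 hb drb.
  have db12 : d b1 b2 < del2.
    have := dtri b1 b b2; rewrite (dsym b b2).
    move: db1 db t2d dl1; move: (d b1 b) (d b2 b) (d b1 b2) => p q s; lra.
  have hc2 : d (g_mul Γ a b1) (g_mul Γ a2 b2) < eps / 2.
    have cab1 : composable Γ a b1 by rewrite /composable rb1.
    apply: (hU2 a b1 a2 b2 ha pb1 cab1 cab2) => //.
    rewrite dsym; move: da t1d dl1; move: (d a2 a) => p; lra.
  exists (g_mul Γ a b1); last by rewrite dsym.
  by rewrite /pfiber /= Pmul ?ha ?pb1 // /composable rb1.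
- move=> c hc; have [a [b [pa pb cab ->]]] := fibmul cxy hc.
  have [a2 ha2 da] := s1' a pa.
  have ey : g_r Γ' y2 = pi (g_s Γ a2) by rewrite Ps ha2 cxy2.
  have [b2 [rb2 pb2]] := @hlift (g_s Γ a2) (unit_s hΓ a2) y2 ey.
  have [b3 hb3 db3] := s2 b2 pb2.
  have drb : d (g_r Γ b3) (g_r Γ b) < del1.
    have := dtri (g_r Γ b3) (g_r Γ b2) (g_r Γ b).
    have := hdr b3 b2; have := hds a2 a; rewrite rb2 -cab (dsym b3 b2) (dsym a2 a).
    move: da db3 t1d t2d dl2.
    move: (d (g_r Γ b3) (g_r Γ b)) (d (g_r Γ b3) (g_s Γ a2)) (d (g_s Γ a2) (g_s Γ a))
      (d a a2) (d b2 b3) => p1 p2 p3 p4 p5; lra.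
  have db1 := hU1 b3 b hb3 pb drb.
  have dbb2 : d b b2 < del2.
    have := dtri b b3 b2; rewrite (dsym b b3).
    move: db1 db3 t2d dl1; move: (d b3 b) (d b2 b3) (d b b2) (dsym b3 b2) => p q s e.
    rewrite e; lra.
  have hc2 : d (g_mul Γ a b) (g_mul Γ a2 b2) < eps / 2.
    have cab2 : composable Γ a2 b2 by rewrite /composable rb2.
    apply: (hU2 a b a2 b2 pa pb cab cab2) => //.
    move: da t1d dl1; move: (d a a2) => p; lra.
  exists (g_mul Γ a2 b2) => //.
  by rewrite /pfiber /= Pmul ?ha2 ?pb2 // /composable rb2.
Qed.


Let Pr := pr hΓ hΓ' hpi_mor.
Let Pinv := pinv hΓ hΓ' hpi_mor.

Lemma lcH' : mlocally_compact H' dH'.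
Proof.
move=> x hx; have [eps eps0 hc] := clusH' hx.
exists [set y | H' y /\ dH' x y <= eps]; last first.
  by exists eps => // y [hy dy]; split => //; exact: ltW.
apply: (clus_mcompact dH'_metric) => [y []//|u hu].
have [y [hy dy cy]] := hc u hu.
by exists y; split.
Qed.

Lemma lcH : mlocally_compact H dH.
Proof.
move=> x hx; have [eps eps0 hc] := clusH' hx.
exists [set y | H y /\ dH' (pi x) (pi y) <= eps]; last first.
  exists eps => // y [hy dy]; split => //.
  exact: ltW (le_lt_trans (dH_ge_dH' x y) dy).
apply: (clus_mcompact dH_metric) => [y []//|u hu].
have [y [hy dy cy]] := hc (fun n => pi (u n)) hu.
have [z [pz hz]] := lift_clus hy cy.
exists z; split; first by split; rewrite /= pz.
move=> eta eta0 N; have eta20 : 0 < eta / 2 by lra.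
have [n [Nn h1 h2]] := hz (eta / 2) (eta / 2) N eta20 eta20.
exists n => //; rewrite /Defs.dH pz.
move: h1 h2; move: (dH' y (pi (u n))) (d z (u n)) => p q; lra.
Qed.

Lemma subH' : subgroupoid Γ' H'.
Proof.
split.
  move=> x hx; split.
  - exact: (Hp_r hΓ hΓ' hpi_mor hinj).
  - exact: (Hp_s hΓ hΓ' hpi_mor hinj).
  - exact: (Hp_i hΓ hΓ' hpi_mor).
by move=> x y hx hy cxy; exact: (Hp_mul hΓ hΓ' hpi_mor hinj hlift).
Qed.

Lemma subH : subgroupoid Γ H.
Proof.
split.
  move=> x hx; have [h1 h2 h3] := subH'.1 _ hx; split.
  - by rewrite /preimage /= Pr.
  - by rewrite /preimage /= Ps.
  - by rewrite /preimage /= Pinv.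
move=> x y hx hy cxy; rewrite /preimage /= Pmul //.
exact: subH'.2 _ _ hx hy (pcomp hpi_mor cxy).
Qed.

Lemma dH'_r x y : H' x -> H' y -> dH' (g_r Γ' x) (g_r Γ' y) <= dH' x y.
Proof.
move=> hx hy; rewrite /dHprime !(fib_r hΓ hΓ' hpi_mor hinj hlift).
exact: hdist_img hdr (HSfibH hx hy).
Qed.

Lemma dH'_s x y : H' x -> H' y -> dH' (g_s Γ' x) (g_s Γ' y) <= dH' x y.
Proof.
move=> hx hy; rewrite /dHprime !(fib_s hΓ hΓ' hpi_mor hinj hlift).
exact: hdist_img hds (HSfibH hx hy).
Qed.

Lemma dH'_i x y : H' x -> H' y -> dH' (g_inv Γ' x) (g_inv Γ' y) <= dH' x y.
Proof.
move=> hx hy; rewrite /dHprime !(fib_i hΓ hΓ' hpi_mor).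
by apply: hdist_img (HSfibH hx hy) => a b; rewrite hdinv.
Qed.

Lemma contH' (f : G' -> G') : (forall x, H' x -> H' (f x)) ->
  (forall x y, H' x -> H' y -> dH' (f x) (f y) <= dH' x y) ->
  mcontinuous H' dH' H' dH' f.
Proof.
move=> hf hd; split => // x hx eps eps0; exists eps => // y hy dxy.
exact: le_lt_trans (hd x y hx hy) dxy.
Qed.

Lemma contH (f : G -> G) (f' : G' -> G') : (forall x, pi (f x) = f' (pi x)) ->
  (forall x, H' x -> H' (f' x)) ->
  (forall x y, H' x -> H' y -> dH' (f' x) (f' y) <= dH' x y) ->
  (forall x y, d (f x) (f y) <= d x y) ->
  mcontinuous H dH H dH f.
Proof.
move=> hpf hf hd hdf; split; first by move=> x hx; rewrite /preimage /= hpf; exact: hf.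
move=> x hx eps eps0; exists eps => // y hy dxy.
apply: le_lt_trans dxy; rewrite /Defs.dH !hpf; apply: lerD => //.
exact: hd.
Qed.

Lemma mulH_cont x y : H x -> H y -> composable Γ x y ->
  forall eps, 0 < eps -> exists2 del, 0 < del & forall x2 y2,
    H x2 -> H y2 -> composable Γ x2 y2 -> dH x x2 < del -> dH y y2 < del ->
    dH (g_mul Γ x y) (g_mul Γ x2 y2) < eps.
Proof.
move=> hx hy cxy eps eps0; have e20 : 0 < eps / 2 by lra.
have [del1 del10 h1] := mul_cont hdG hmulc cxy e20.
have [del2 del20 h2] := mulH'_cont hx hy (pcomp hpi_mor cxy) e20.
exists (Num.min del1 del2); first by rewrite lt_min del10 del20.
move=> x2 y2 hx2 hy2 cxy2 dx dy.
move: dx dy; rewrite !lt_min => /andP [dx1 dx2] /andP [dy1 dy2].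
rewrite /Defs.dH !Pmul //.
have a1 := h1 x2 y2 cxy2 (le_lt_trans (dH_ge_d _ _) dx1) (le_lt_trans (dH_ge_d _ _) dy1).
have a2 := h2 _ _ hx2 hy2 (pcomp hpi_mor cxy2)
  (le_lt_trans (dH_ge_dH' _ _) dx2) (le_lt_trans (dH_ge_dH' _ _) dy2).
move: a1 a2; move: (d (g_mul Γ x y) (g_mul Γ x2 y2))
  (dH' (g_mul Γ' (pi x) (pi y)) (g_mul Γ' (pi x2) (pi y2))) => p q; lra.
Qed.

Lemma open_pi : mopen_map H dH H' dH' pi.
Proof.
move=> U [UH hU]; split; first by move=> _ [x Ux <-]; exact: UH.
move=> _ [x Ux <-]; have [e e0 he] := hU x Ux.
exists (e / 2); first lra.
move=> y [hy dy]; have hx : H' (pi x) := UH x Ux.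
have [t te [_ hs]] := dH'_near hx hy dy.
have [z pz dz] := hs x erefl.
exists z => //; apply: he; split; first by rewrite /preimage /= pz.
rewrite /Defs.dH pz; move: dz te dy; clear hs; move: (d x z) (dH' (pi x) y) t => p q s; lra.
Qed.

Lemma cont_pi : mcontinuous H dH H' dH' pi.
Proof.
split => // x hx eps eps0; exists eps => // y hy dxy.
exact: le_lt_trans (dH_ge_dH' x y) dxy.
Qed.

Lemma proper_pi : mproper H dH H' dH' pi.
Proof.
move=> K hK.
apply: (clus_mcompact dH_metric) => [x [] //|u hu].
have [y [Ky cy]] := mcompact_clus dH'_metric hK (fun n => (hu n).2).
have hy : H' y := hK.1 y Ky.
have [z [pz hz]] := lift_clus hy cy.
exists z; split; first by split; rewrite /preimage /= pz.
move=> eta eta0 N; have eta20 : 0 < eta / 2 by lra.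
have [n [Nn h1 h2]] := hz (eta / 2) (eta / 2) N eta20 eta20.
exists n => //; rewrite /Defs.dH pz.
move: h1 h2; move: (dH' y (pi (u n))) (d z (u n)) => p q; lra.
Qed.

Lemma main_result :
  [/\ metric_on H' dH', metric_on H dH,
      metric_lch_topological_groupoid Γ' H' dH',
      metric_lch_topological_groupoid Γ H dH &
      [/\ mopen_map H dH H' dH' pi, mcontinuous H dH H' dH' pi,
          mproper H dH H' dH' pi & groupoid_morphism_on Γ Γ' H pi]].
Proof.
split.
- exact: dH'_metric.
- exact: dH_metric.
- split; first exact: subH'.
  split; first exact: mhausdorffP dH'_metric.
  split; first exact: lcH'.
  split; first exact: contH' (Hp_r hΓ hΓ' hpi_mor hinj) dH'_r.
  split; first exact: contH' (Hp_s hΓ hΓ' hpi_mor hinj) dH'_s.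
  split; first exact: contH' (Hp_i hΓ hΓ' hpi_mor) dH'_i.
  exact: mulH'_cont.
- split; first exact: subH.
  split; first exact: mhausdorffP dH_metric.
  split; first exact: lcH.
  split; first exact: contH Pr (Hp_r hΓ hΓ' hpi_mor hinj) dH'_r hdr.
  split; first exact: contH Ps (Hp_s hΓ hΓ' hpi_mor hinj) dH'_s hds.
  split.
    by apply: contH Pinv (Hp_i hΓ hΓ' hpi_mor) dH'_i _ => a b; rewrite hdinv.
  exact: mulH_cont.
- split.
  + exact: open_pi.
  + exact: cont_pi.
  + exact: proper_pi.
  + by move=> x y _ _ cxy; exact: hpi_mor.
Qed.

End Main.

Theorem theorem7p70 (R : realType) (G G' : ptopologicalType)
  (Γ : groupoid G) (Γ' : groupoid G')
  (lam : G -> {measure set (Borel G) -> \bar R})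
  (lam' : G' -> {measure set (Borel G') -> \bar R})
  (sigma : G -> G -> R * R) (sigma' : G' -> G' -> R * R)
  (dG : G -> G -> R) (pi : G -> G')
  (hG : lch_topological_groupoid Γ) (hG' : lch_topological_groupoid Γ')
  (hlam : haar_system Γ lam) (hlam' : haar_system Γ' lam')
  (hsig : two_cocycle Γ sigma) (hsig' : two_cocycle Γ' sigma')
  (hG'sc : @second_countable G')
  (hdG : metrizes dG)
  (hdinv : forall x y, dG (g_inv Γ x) (g_inv Γ y) = dG x y)
  (hdr : forall x y, dG (g_r Γ x) (g_r Γ y) <= dG x y)
  (hds : forall x y, dG (g_s Γ x) (g_s Γ y) <= dG x y)
  (hpi_cont : continuous pi) (hpi_proper : proper_map pi)
  (hpi_mor : groupoid_morphism_on Γ Γ' setT pi)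
  (hpi_fib : forall u, g_unit Γ u ->
     [/\ (forall x, range_fiber Γ u x -> range_fiber Γ' (pi u) (pi x)),
         {within range_fiber Γ u, continuous pi} &
         exists g : G' -> G,
           [/\ (forall x, range_fiber Γ u x -> g (pi x) = x),
               (forall y, range_fiber Γ' (pi u) y ->
                  range_fiber Γ u (g y) /\ pi (g y) = y) &
               {within range_fiber Γ' (pi u), continuous g}]])
  (hpi_meas : forall u, g_unit Γ u -> forall E : set G, borel_set E ->
     E `<=` range_fiber Γ u -> lam u E = lam' (pi u) (pi @` E))
  (hpi_sig : forall x y, composable Γ x y -> sigma x y = sigma' (pi x) (pi y))
  (hpi_reg : regular_map dG pi) :
  let H' := Hprime pi in
  let H := pi @^-1` H' in
  let dH' := dHprime dG pi in
  let dH := dH dG pi in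
  [/\ metric_on H' dH', metric_on H dH,
      metric_lch_topological_groupoid Γ' H' dH',
      metric_lch_topological_groupoid Γ H dH &
      [/\ mopen_map H dH H' dH' pi, mcontinuous H dH H' dH' pi,
          mproper H dH H' dH' pi & groupoid_morphism_on Γ Γ' H pi]].
Proof.
have [hΓ [hGH [hLC [_ [_ [_ hmulc]]]]]] := hG.
have [hΓ' [hG'H _]] := hG'.
have hinj : forall a b, g_r Γ a = g_r Γ b -> pi a = pi b -> a = b.
  move=> a b rab pab; have [_ _ [g [hg _ _]]] := hpi_fib (g_r Γ a) (unit_r hΓ a).
  by rewrite -(hg a erefl) pab hg //; rewrite /range_fiber /= rab.
have hlift : forall u, g_unit Γ u -> forall y, g_r Γ' y = pi u ->
    exists b, g_r Γ b = u /\ pi b = y.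
  move=> u hu y hy; have [_ _ [g [_ hg2 _]]] := hpi_fib u hu.
  by have [h1 h2] := hg2 y hy; exists (g y).
exact: (main_result hΓ hΓ' hGH hG'H hLC hmulc hdG hdinv hdr hds hpi_cont
  hpi_proper hpi_mor hinj hlift hpi_reg).
Qed.
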